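(* Let $X,Y$ be metric spaces, $\mathcal H$ a Hilbert space, and $T\colon\ell^2(X;\mathcal H)\to\ell^2(Y;\mathcal H)$ a weakly approximately controlled bounded operator. Then for every $r\ge0$ and $\delta>0$ there is $R\ge0$ such that whenever $A\subseteq X$ has $\mathrm{diam}(A)\le r$ and $C,C'\subseteq Y$ satisfy $\|\chi_CT\chi_A\|\ge\delta$ and $\|\chi_{C'}T\chi_A\|\ge\delta$, then $d_Y(C,C')\le R$.
   Context: For $A\subseteq X$, $\chi_A$ is the orthogonal projection of $\ell^2(X;\mathcal H)$ onto $\ell^2(A;\mathcal H)$ (similarly on $Y$). An operator $t$ on $\ell^2(X;\mathcal H)$ has propagation at most $R$ if $\chi_Bt\chi_A=0$ whenever $d(A,B)>R$; it is $\varepsilon$-$R$-approximable if there is $s$ of propagation at most $R$ with $\|s-t\|\le\varepsilon$. $T\colon\ell^2(X;\mathcal H)\to\ell^2(Y;\mathcal H)$ is weakly approximately controlled if for every $r\ge0$ and $\varepsilon>0$ there is $R\ge0$ such that $TtT^*$ is $\varepsilon$-$R$-approximable for every $t\in\mathcal B(\ell^2(X;\mathcal H))$ with $\|t\|\le1$ and propagation at most $r$. *)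

(* Defs.v *)
From HB Require Import structures.
From mathcomp Require Import all_boot all_order all_algebra.
From mathcomp Require Import all_classical all_reals all_analysis.
From mathcomp Require Import complex.
Set Implicit Arguments. Unset Strict Implicit. Unset Printing Implicit Defensive.
Import Order.TTheory GRing.Theory Num.Theory.
Local Open Scope classical_set_scope.
Local Open Scope ring_scope.

Section Defs.
Variable R : realType.
Local Notation C := (R[i]).

Definition is_metric (X : choiceType) (d : X -> X -> R) : Prop :=
  [/\ (forall x y, 0 <= d x y),
      (forall x y, d x y = 0 <-> x = y),
      (forall x y, d x y = d y x) &
      (forall x y z, d x z <= d x y + d y z)].

(** d(A,B) = inf {d(a,b) | a in A, b in B}  (= +oo if A or B is empty). *)
Definition setdist (X : choiceType) (d : X -> X -> R) (A B : set X) : \bar R :=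
  ereal_inf [set (d a b)%:E | a in A & b in B].

(** diam(A) = sup {d(a,b) | a, b in A}  (= -oo if A is empty). *)
Definition diam (X : choiceType) (d : X -> X -> R) (A : set X) : \bar R :=
  ereal_sup [set (d a b)%:E | a in A & b in A].

(** Complex Hilbert spaces: an inner product (linear in the first variable,
    conjugate-linear in the second), complete for the induced norm. *)
Section Hilbert.
Variable H : lmodType C.
Variable ip : H -> H -> C.

Definition hnorm (v : H) : R := Num.sqrt (complex.Re (ip v v)).

Definition is_hilbert : Prop :=
  [/\ (forall (a : C) (u v w : H), ip (a *: u + v) w = a * ip u w + ip v w),
      (forall u v : H, ip u v = conjc (ip v u)),
      (forall u : H, 0 <= ip u u),
      (forall u : H, ip u u = 0 -> u = 0) &
      (forall u : nat -> H,
         (forall e : R, 0 < e -> exists N, forall m n, (N <= m)%N -> (N <= n)%N ->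
              hnorm (u m - u n) < e) ->
         exists l : H, forall e : R, 0 < e -> exists N, forall n, (N <= n)%N ->
              hnorm (u n - l) < e)].

(** l^2(X;H), represented by functions X -> H with finite square sum. *)
Definition l2sq (X : choiceType) (f : X -> H) : \bar R :=
  \esum_(x in [set: X]) ((hnorm (f x)) ^+ 2)%:E.
Definition in_l2 (X : choiceType) (f : X -> H) : Prop := (l2sq f < +oo)%E.
Definition l2norm (X : choiceType) (f : X -> H) : R := Num.sqrt (fine (l2sq f)).

(** Sums of absolutely summable real / complex families over a set. *)
Definition rsum (X : choiceType) (u : X -> R) : R :=
  fine (\esum_(x in [set: X]) (Num.max (u x) 0)%:E)
  - fine (\esum_(x in [set: X]) (Num.max (- u x) 0)%:E).
Definition csum (X : choiceType) (u : X -> C) : C :=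
  Complex (rsum (fun x => complex.Re (u x))) (rsum (fun x => complex.Im (u x))).

Definition l2ip (X : choiceType) (f g : X -> H) : C := csum (fun x => ip (f x) (g x)).

(** Operators l^2(X;H) -> l^2(Y;H) are modelled as maps (X -> H) -> (Y -> H),
    only their values on l^2 vectors being relevant. *)
Definition opnorm_le (X Y : choiceType) (t : (X -> H) -> (Y -> H)) (c : R) : Prop :=
  forall f, in_l2 f -> l2norm (t f) <= c * l2norm f.

Definition opnorm (X Y : choiceType) (t : (X -> H) -> (Y -> H)) : \bar R :=
  ereal_inf [set c%:E | c in [set c : R | 0 <= c /\ opnorm_le t c]].

Definition bounded_op (X Y : choiceType) (t : (X -> H) -> (Y -> H)) : Prop :=
  [/\ (forall (a : C) f g, in_l2 f -> in_l2 g ->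
         t (fun x => a *: f x + g x) = (fun y => a *: t f y + t g y)),
      (forall f, in_l2 f -> in_l2 (t f)) &
      exists c : R, opnorm_le t c].

Definition is_adjoint (X Y : choiceType) (T : (X -> H) -> (Y -> H))
    (S : (Y -> H) -> (X -> H)) : Prop :=
  bounded_op S /\
  forall f g, in_l2 f -> in_l2 g -> l2ip (T f) g = l2ip f (S g).

Definition chi (X : choiceType) (A : set X) (f : X -> H) : X -> H :=
  fun x => if `[< A x >] then f x else 0.

Definition propagation_le (X : choiceType) (d : X -> X -> R)
    (t : (X -> H) -> (X -> H)) (r : R) : Prop :=
  forall A B : set X, (r%:E < setdist d A B)%E ->
    forall f, in_l2 f -> chi B (t (chi A f)) = (fun _ => 0).

Definition approximable (X : choiceType) (d : X -> X -> R)
    (t : (X -> H) -> (X -> H)) (eps Rr : R) : Prop :=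
  exists s, [/\ bounded_op s, propagation_le d s Rr &
     (opnorm (fun f x => (s f x - t f x)%R) <= eps%:E)%E].

Definition weakly_approx_controlled (X Y : choiceType)
    (dX : X -> X -> R) (dY : Y -> Y -> R)
    (T : (X -> H) -> (Y -> H)) (Tstar : (Y -> H) -> (X -> H)) : Prop :=
  forall r eps : R, 0 <= r -> 0 < eps -> exists Rr : R, 0 <= Rr /\
    forall t : (X -> H) -> (X -> H), bounded_op t -> (opnorm t <= 1%:E)%E ->
      propagation_le dX t r ->
      approximable dY (fun g => T (t (Tstar g))) eps Rr.
End Hilbert.
End Defs.

(* Main.v *)
Require Import Defs.
From HB Require Import structures.
From mathcomp Require Import all_boot all_order all_algebra.
From mathcomp Require Import all_classical all_reals all_analysis.
From mathcomp Require Import complex.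
From mathcomp Require Import ring lra.
Import Order.TTheory GRing.Theory Num.Theory.
Local Open Scope classical_set_scope.
Local Open Scope ring_scope.

Set Implicit Arguments.

Section HS.
Variable R : realType.
Variable H : lmodType R[i].
Variable ip : H -> H -> R[i].
Hypothesis hH : is_hilbert ip.

Definition cn (c : R[i]) : R := Num.sqrt (complex.Re c ^+ 2 + complex.Im c ^+ 2).

Lemma cReJ (z : R[i]) : complex.Re (conjc z) = complex.Re z.
Proof. by case: z. Qed.
Lemma cImJ (z : R[i]) : complex.Im (conjc z) = - complex.Im z.
Proof. by case: z. Qed.
Lemma cReM (x y : R[i]) : complex.Re (x * y) = complex.Re x * complex.Re y - complex.Im x * complex.Im y.
Proof. by case: x => a b; case: y => c d. Qed.
Lemma cImM (x y : R[i]) : complex.Im (x * y) = complex.Re x * complex.Im y + complex.Im x * complex.Re y.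
Proof. by case: x => a b; case: y => c d. Qed.
Lemma cReD (x y : R[i]) : complex.Re (x + y) = complex.Re x + complex.Re y.
Proof. by case: x => a b; case: y => c d. Qed.
Lemma cImD (x y : R[i]) : complex.Im (x + y) = complex.Im x + complex.Im y.
Proof. by case: x => a b; case: y => c d. Qed.

Lemma ip_linl (a : R[i]) u v w : ip (a *: u + v) w = a * ip u w + ip v w.
Proof. by case: hH => h _ _ _ _; apply: h. Qed.
Lemma ip_sym u v : ip u v = conjc (ip v u).
Proof. by case: hH => _ h _ _ _; apply: h. Qed.
Lemma ip_pos u : 0 <= ip u u.
Proof. by case: hH => _ _ h _ _; apply: h. Qed.
Lemma ip_def u : ip u u = 0 -> u = 0.
Proof. by case: hH => _ _ _ h _; apply: h. Qed.

Lemma ip0l w : ip 0 w = 0.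
Proof.
have h := ip_linl 1 0 0 w; rewrite scaler0 addr0 mul1r in h.
by have := congr1 (fun z => z - ip 0 w) h; rewrite /= subrr addrK => ->.
Qed.
Lemma ip0r w : ip w 0 = 0.
Proof. by rewrite ip_sym ip0l; case: hH => _ _ _ _ _; rewrite /conjc /= oppr0. Qed.
Lemma ipZl a u w : ip (a *: u) w = a * ip u w.
Proof. by have := ip_linl a u 0 w; rewrite addr0 ip0l addr0. Qed.
Lemma ipDl u v w : ip (u + v) w = ip u w + ip v w.
Proof. by have := ip_linl 1 u v w; rewrite scale1r mul1r. Qed.
Lemma ipZr a u w : ip w (a *: u) = conjc a * ip w u.
Proof. by rewrite ip_sym ipZl rmorphM /= -ip_sym. Qed.
Lemma ipDr u v w : ip w (u + v) = ip w u + ip w v.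
Proof. by rewrite ip_sym ipDl rmorphD /= -!ip_sym. Qed.

Lemma Im_ipself u : complex.Im (ip u u) = 0.
Proof. exact: ger0_Im (ip_pos u). Qed.
Lemma Re_ipself_ge0 u : 0 <= complex.Re (ip u u).
Proof. by have := ip_pos u; rewrite lecE => /andP[]. Qed.

Lemma hnorm_ge0 u : 0 <= hnorm ip u.
Proof. exact: sqrtr_ge0. Qed.
Lemma hnorm_sq u : hnorm ip u ^+ 2 = complex.Re (ip u u).
Proof. by rewrite sqr_sqrtr // Re_ipself_ge0. Qed.

Lemma cn_ge0 c : 0 <= cn c. Proof. exact: sqrtr_ge0. Qed.
Lemma cn_sq c : cn c ^+ 2 = complex.Re c ^+ 2 + complex.Im c ^+ 2.
Proof. by rewrite sqr_sqrtr // addr_ge0 // sqr_ge0. Qed.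

Lemma hnormZ c u : hnorm ip (c *: u) = cn c * hnorm ip u.
Proof.
rewrite /hnorm /cn ipZl ipZr mulrA cReM Im_ipself mulr0 subr0.
rewrite -sqrtrM; last by rewrite addr_ge0 // sqr_ge0.
congr Num.sqrt; congr (_ * _).
by case: c => a b /=; rewrite mulrN opprK mulrC [b * _]mulrC -!expr2 addrC.
Qed.

Lemma Re_ip_expand (s : R) a b :
  complex.Re (ip ((s%:C)%C *: a + b) ((s%:C)%C *: a + b)) =
  s ^+ 2 * hnorm ip a ^+ 2 + 2 * s * complex.Re (ip a b) + hnorm ip b ^+ 2.
Proof.
rewrite ipDl !ipDr !ipZl !ipZr !cReD !cReM /= !hnorm_sq.
rewrite (ip_sym b a) cReJ cImJ Im_ipself.
rewrite /conjc /=. ring.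
Qed.

Lemma key_ineq (s : R) a b :
  0 <= s ^+ 2 * hnorm ip a ^+ 2 + 2 * s * complex.Re (ip a b) + hnorm ip b ^+ 2.
Proof. by rewrite -Re_ip_expand Re_ipself_ge0. Qed.

Lemma Re_ip_bound a b : `|complex.Re (ip a b)| <= (hnorm ip a ^+ 2 + hnorm ip b ^+ 2) / 2.
Proof.
have h1 := key_ineq 1 a b; have h2 := key_ineq (-1) a b.
rewrite ler_norml; apply/andP; split; rewrite -subr_ge0.
  move: h1; rewrite expr1n mul1r mulr1 => h1. 
  have -> : complex.Re (ip a b) - - ((hnorm ip a ^+ 2 + hnorm ip b ^+ 2) / 2) =
     (hnorm ip a ^+ 2 + 2 * complex.Re (ip a b) + hnorm ip b ^+ 2) / 2 by field.
  by rewrite divr_ge0.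
move: h2; rewrite sqrrN expr1n mul1r mulrN1 => h2.
have -> : (hnorm ip a ^+ 2 + hnorm ip b ^+ 2) / 2 - complex.Re (ip a b) =
   (hnorm ip a ^+ 2 + - 2 * complex.Re (ip a b) + hnorm ip b ^+ 2) / 2 by field.
by rewrite divr_ge0.
Qed.

Lemma Im_ip_as_Re a b : complex.Im (ip a b) = complex.Re (ip a ('i%C *: b)).
Proof. by rewrite ipZr cReM /= ; ring. Qed.

Lemma cn_i : cn 'i%C = 1.
Proof. by rewrite /cn /= expr0n expr1n add0r sqrtr1. Qed.

Lemma Im_ip_bound a b : `|complex.Im (ip a b)| <= (hnorm ip a ^+ 2 + hnorm ip b ^+ 2) / 2.
Proof. by rewrite Im_ip_as_Re; have := Re_ip_bound a ('i%C *: b); rewrite hnormZ cn_i mul1r. Qed.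

Lemma Re_ip_le (l : R) a b : 0 < l ->
  complex.Re (ip a b) <= (l * hnorm ip a ^+ 2 + l^-1 * hnorm ip b ^+ 2) / 2.
Proof.
move=> l0; have := key_ineq (- l) a b; rewrite sqrrN => h.
rewrite -subr_ge0.
have -> : (l * hnorm ip a ^+ 2 + l^-1 * hnorm ip b ^+ 2) / 2 - complex.Re (ip a b)
  = (l ^+ 2 * hnorm ip a ^+ 2 + 2 * - l * complex.Re (ip a b) + hnorm ip b ^+ 2) / (2 * l).
  by field; rewrite gt_eqF.
by rewrite divr_ge0 // mulr_ge0 // ltW.
Qed.

Lemma hnormD_le a b : hnorm ip (a + b) ^+ 2 <= 2 * (hnorm ip a ^+ 2 + hnorm ip b ^+ 2).
Proof.
have := Re_ip_expand 1 a b; rewrite scale1r expr1n !mul1r mulr1 -hnorm_sq => ->.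
have := Re_ip_bound a b; rewrite ler_norml => /andP[_ h].
rewrite -subr_ge0.
have -> : 2 * (hnorm ip a ^+ 2 + hnorm ip b ^+ 2) -
  (hnorm ip a ^+ 2 + 2 * complex.Re (ip a b) + hnorm ip b ^+ 2) =
  2 * ((hnorm ip a ^+ 2 + hnorm ip b ^+ 2) / 2 - complex.Re (ip a b)) by field.
by rewrite mulr_ge0 // subr_ge0.
Qed.

Lemma hnorm_eq0 u : hnorm ip u = 0 -> u = 0.
Proof.
move=> h; apply: ip_def; have := hnorm_sq u; rewrite h expr0n /= => e.
by apply/eqP; rewrite eq_complex /= -e Im_ipself !eqxx.
Qed.

Lemma hnorm0 : hnorm ip 0 = 0.
Proof. by rewrite /hnorm ip0l /= sqrtr0. Qed.

End HS.
Arguments cn {R}.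

Section ES.
Variable R : realType.
Variable X : choiceType.
Implicit Types (u v p q : X -> R).

Definition ES (p : X -> R) : \bar R := \esum_(x in [set: X]) (p x)%:E.
Definition fsum (u : X -> R) : Prop := (ES (fun x => (`|u x|)%R) < +oo)%E.

Lemma ES_ge0 p : (forall x, 0 <= p x) -> (0 <= ES p)%E.
Proof. by move=> h; apply: esum_ge0 => x _; rewrite lee_fin. Qed.

Lemma ES_le p q : (forall x, p x <= q x) -> (ES p <= ES q)%E.
Proof. by move=> h; apply: le_esum => x _; rewrite lee_fin. Qed.

Lemma ESD p q : (forall x, 0 <= p x) -> (forall x, 0 <= q x) ->
  ES (fun x => p x + q x) = (ES p + ES q)%E.
Proof.
move=> hp hq; rewrite /ES -esumD; try by move=> x _; rewrite lee_fin.
by apply: eq_esum => x _; rewrite EFinD.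
Qed.

Lemma ESD3 p q r : (forall x, 0 <= p x) -> (forall x, 0 <= q x) -> (forall x, 0 <= r x) ->
  ES (fun x => p x + (q x + r x)) = (ES p + (ES q + ES r))%E.
Proof.
move=> hp hq hr; rewrite (@ESD p (fun x => q x + r x)) // ?ESD // => x.
by rewrite addr_ge0.
Qed.

Lemma ESZ c p : 0 <= c -> (forall x, 0 <= p x) ->
  ES (fun x => c * p x) = (c%:E * ES p)%E.
Proof.
move=> c0 hp; rewrite /ES /esum.
have -> : [set \sum_(x \in A) (c * p x)%:E | A in fsets [set: X]] =
   [set (c%:E * y)%E | y in [set \sum_(x \in A) (p x)%:E | A in fsets [set: X]]].
  apply/seteqP; split.
    move=> _ [A hA <-]; exists (\sum_(x \in A) (p x)%:E)%E; first by exists A.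
    by rewrite ge0_mule_fsumr // => i; rewrite lee_fin.
  move=> _ [_ [A hA <-] <-]; exists A => //.
  by rewrite ge0_mule_fsumr // => i; rewrite lee_fin.
rewrite ereal_supZl //; apply/set0P; exists (\sum_(x \in set0) (p x)%:E)%E.
by exists set0 => //; exact: fsets_set0.
Qed.

Lemma ES_fin p : (forall x, 0 <= p x) -> (ES p < +oo)%E -> ES p = (fine (ES p))%:E.
Proof. by move=> hp hf; rewrite fineK // ge0_fin_numE // ES_ge0. Qed.

Lemma ES0 : ES (fun=> 0) = 0%E.
Proof. by rewrite /ES esum1. Qed.

Lemma ES_single p x0 : (forall x, 0 <= p x) -> ((p x0)%:E <= ES p)%E.
Proof.
move=> hp; apply: esum_ge; exists [set x0]; first by split=> //; exact: finite_set1.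
by rewrite fsbig_set1.
Qed.

Lemma ES_eq0 p : (forall x, 0 <= p x) -> ES p = 0%E -> forall x, p x = 0.
Proof.
move=> hp h x; apply/eqP; rewrite eq_le hp andbT.
by have := @ES_single p x hp; rewrite h lee_fin.
Qed.

Lemma fsum_le u p : (forall x, `|u x| <= p x) -> (ES p < +oo)%E -> fsum u.
Proof. by move=> h hp; apply: le_lt_trans hp; apply: ES_le. Qed.

Lemma fsumD u v : fsum u -> fsum v -> fsum (fun x => u x + v x).
Proof.
move=> hu hv; apply: (@fsum_le _ (fun x => `|u x| + `|v x|)).
  by move=> x; exact: ler_normD.
by rewrite ESD //; apply: lte_add_pinfty.
Qed.

Lemma fsumZ c u : fsum u -> fsum (fun x => c * u x).
Proof.
move=> hu; apply: (@fsum_le _ (fun x => `|c| * `|u x|)).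
  by move=> x; rewrite normrM.
by rewrite ESZ // ; apply: lte_mul_pinfty => //; rewrite lee_fin.
Qed.

Lemma fsumN u : fsum u -> fsum (fun x => - u x).
Proof. by move=> hu; apply: (@fsum_le _ (fun x => `|u x|)) => // x; rewrite normrN. Qed.

Lemma rsumN u : rsum (fun x => - u x) = - rsum u.
Proof.
rewrite /rsum /=.
have -> : (fun x => (Num.max (- - u x) 0)%:E) = (fun x => (Num.max (u x) 0)%:E).
  by apply: funext => x; rewrite opprK.
by rewrite opprB.
Qed.

Lemma maxpos_le u x : 0 <= Num.max (u x) 0 <= `|u x|.
Proof.
rewrite le_max lexx orbT /= ge_max normr_ge0 andbT.
by rewrite ler_norm.
Qed.

Lemma fsum_pos u : fsum u -> (ES (fun x => Num.max (u x) 0%R) < +oo)%E.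
Proof.
move=> hu; apply: le_lt_trans hu; apply: ES_le => x.
by case/andP: (maxpos_le u x).
Qed.

Lemma fsum_neg u : fsum u -> (ES (fun x => Num.max (- u x)%R 0%R) < +oo)%E.
Proof. by move=> hu; apply: fsum_pos; apply: fsumN. Qed.

Lemma rsumE u : rsum u = fine (ES (fun x => Num.max (u x) 0)) - fine (ES (fun x => Num.max (- u x) 0)).
Proof. by []. Qed.

Lemma maxge0 (a : R) : 0 <= Num.max a 0.
Proof. by rewrite le_max lexx orbT. Qed.

Lemma rsumD u v : fsum u -> fsum v -> rsum (fun x => u x + v x) = rsum u + rsum v.
Proof.
move=> hu hv; have huv := fsumD hu hv.
rewrite !rsumE.
set P := fun x => Num.max (u x + v x) 0.
set N := fun x => Num.max (- (u x + v x)) 0.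
set Pu := fun x => Num.max (u x) 0.
set Nu := fun x => Num.max (- u x) 0.
set Pv := fun x => Num.max (v x) 0.
set Nv := fun x => Num.max (- v x) 0.
have e : (fun x => P x + (Nu x + Nv x)) = (fun x => N x + (Pu x + Pv x)).
  apply: funext => x; rewrite /P /N /Pu /Nu /Pv /Nv.
  have m : forall a : R, Num.max a 0 - Num.max (- a) 0 = a.
    move=> a; case: (leP 0 a) => ha.
      rewrite (max_idPr _); first by rewrite subr0.
      by rewrite oppr_le0.
    rewrite (max_idPl _) ?sub0r ?opprK //.
    by rewrite oppr_ge0 ltW.
  apply/eqP; rewrite -subr_eq0; apply/eqP.
  have := m (u x + v x); have := m (u x); have := m (v x). lra.
have := congr1 ES e.
rewrite (@ESD3 P Nu Nv) ?(@ESD3 N Pu Pv); try (move=> x; exact: maxge0).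
rewrite (@ES_fin P (fun x => maxge0 _) (fsum_pos huv)).
rewrite (@ES_fin N (fun x => maxge0 _) (fsum_neg huv)).
rewrite (@ES_fin Pu (fun x => maxge0 _) (fsum_pos hu)).
rewrite (@ES_fin Nu (fun x => maxge0 _) (fsum_neg hu)).
rewrite (@ES_fin Pv (fun x => maxge0 _) (fsum_pos hv)).
rewrite (@ES_fin Nv (fun x => maxge0 _) (fsum_neg hv)).
rewrite -!EFinD => -[]. rewrite /P /N /Pu /Nu /Pv /Nv. lra.
Qed.


Lemma rsumZp c u : 0 <= c -> fsum u -> rsum (fun x => c * u x) = c * rsum u.
Proof.
move=> c0 hu; rewrite !rsumE.
have e1 : (fun x => Num.max (c * u x) 0) = (fun x => c * Num.max (u x) 0).
  by apply: funext => x; rewrite maxr_pMr // mulr0.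
have e2 : (fun x => Num.max (- (c * u x)) 0) = (fun x => c * Num.max (- u x) 0).
  by apply: funext => x; rewrite maxr_pMr // mulr0 mulrN.
rewrite e1 e2 !ESZ //; try (move=> x; exact: maxge0).
rewrite (@ES_fin (fun x => Num.max (u x) 0) (fun x => maxge0 _) (fsum_pos hu)).
rewrite (@ES_fin (fun x => Num.max (- u x) 0) (fun x => maxge0 _) (fsum_neg hu)).
by rewrite -!EFinM /= mulrBr.
Qed.

Lemma rsumZ c u : fsum u -> rsum (fun x => c * u x) = c * rsum u.
Proof.
move=> hu; case: (leP 0 c) => c0; first exact: rsumZp.
have -> : (fun x => c * u x) = (fun x => - ((- c) * u x)).
  by apply: funext => x; rewrite mulNr opprK.
by rewrite rsumN rsumZp ?mulNr ?opprK // oppr_ge0 ltW.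
Qed.

Lemma rsum_ge0E p : (forall x, 0 <= p x) -> rsum p = fine (ES p).
Proof.
move=> hp; rewrite rsumE.
have -> : (fun x => Num.max (p x) 0) = p.
  by apply: funext => x; apply/max_idPl; exact: hp.
have -> : (fun x => Num.max (- p x) 0) = (fun=> 0).
  by apply: funext => x; apply/max_idPr; rewrite oppr_le0.
by rewrite ES0 subr0.
Qed.

Lemma rsum0 : rsum (fun _ : X => 0 : R) = 0.
Proof. by rewrite rsum_ge0E // ES0. Qed.

Lemma fsum0 : fsum (fun _ => 0).
Proof.
rewrite /fsum (_ : (fun x => `|0|) = (fun=> 0)) ?ES0 //.
by apply: funext => x; rewrite normr0.
Qed.

Lemma rsum_lin c1 c2 u v w : fsum u -> fsum v -> fsum w ->
  rsum (fun x => c1 * u x + c2 * v x + w x) = c1 * rsum u + c2 * rsum v + rsum w.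
Proof.
move=> hu hv hw.
rewrite (@rsumD (fun x => c1 * u x + c2 * v x) w) //; last by apply: fsumD; apply: fsumZ.
by rewrite rsumD ?rsumZ //; apply: fsumZ.
Qed.

Lemma rsum_le u v : fsum u -> fsum v -> (forall x, u x <= v x) -> rsum u <= rsum v.
Proof.
move=> hu hv h.
have -> : v = (fun x => u x + (v x - u x)) by apply: funext => x; rewrite addrC subrK.
rewrite rsumD //; last by apply: fsumD => //; apply: fsumN.
rewrite lerDl rsum_ge0E ?fine_ge0 // ?ES_ge0 // => x; by rewrite subr_ge0.
Qed.

End ES.
Arguments ES {R X}. Arguments fsum {R X}.
Arguments fsum_le {R X u} p _ _.

Section L2.
Variable R : realType.
Variable H : lmodType R[i].
Variable ip : H -> H -> R[i].
Hypothesis hH : is_hilbert ip.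
Variable X : choiceType.
Implicit Types (f g u w : X -> H).
Local Notation hn := (hnorm ip).

Lemma l2sq_ES f : l2sq ip f = ES (fun x => hn (f x) ^+ 2).
Proof. by []. Qed.

Lemma hn2_ge0 f x : 0 <= hn (f x) ^+ 2.
Proof. exact: sqr_ge0. Qed.

Lemma l2sq_ge0 f : (0 <= l2sq ip f)%E.
Proof. by apply: ES_ge0 => x; exact: sqr_ge0. Qed.

Lemma l2sq_fin f : in_l2 ip f -> l2sq ip f = (fine (l2sq ip f))%:E.
Proof. by move=> h; apply: ES_fin => // x; exact: sqr_ge0. Qed.

Lemma l2norm_ge0 f : 0 <= l2norm ip f.
Proof. exact: sqrtr_ge0. Qed.

Lemma l2norm_sq f : l2norm ip f ^+ 2 = fine (l2sq ip f).
Proof. by rewrite sqr_sqrtr // fine_ge0 // l2sq_ge0. Qed.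

Lemma in_l2_0 : in_l2 ip (fun _ : X => 0).
Proof.
rewrite /in_l2 l2sq_ES (_ : (fun x => hn 0 ^+ 2) = fun=> 0) ?ES0 //.
by apply: funext => x; rewrite hnorm0 // expr0n.
Qed.

Lemma l2sqZ c f : l2sq ip (fun x => c *: f x) = ((cn c ^+ 2)%:E * l2sq ip f)%E.
Proof.
rewrite !l2sq_ES -ESZ ?sqr_ge0 //; last by move=> x; exact: sqr_ge0.
by congr ES; apply: funext => x; rewrite hnormZ // exprMn.
Qed.

Lemma in_l2Z c f : in_l2 ip f -> in_l2 ip (fun x => c *: f x).
Proof.
move=> h; rewrite /in_l2 l2sqZ (l2sq_fin h) -EFinM; exact: ltry.
Qed.

Lemma l2normZ c f : in_l2 ip f -> l2norm ip (fun x => c *: f x) = cn c * l2norm ip f.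
Proof.
move=> h; rewrite /l2norm l2sqZ (l2sq_fin h) -EFinM /= sqrtrM ?sqr_ge0 //.
by rewrite sqrtr_sqr ger0_norm // cn_ge0.
Qed.

Lemma in_l2D f g : in_l2 ip f -> in_l2 ip g -> in_l2 ip (fun x => f x + g x).
Proof.
move=> hf hg; rewrite /in_l2 l2sq_ES.
apply: (@le_lt_trans _ _ (ES (fun x => 2 * (hn (f x) ^+ 2 + hn (g x) ^+ 2)))).
  by apply: ES_le => x; exact: hnormD_le.
rewrite ESZ // ?ESD //; try (move=> x; exact: sqr_ge0).
  rewrite -!l2sq_ES (l2sq_fin hf) (l2sq_fin hg) -EFinD -EFinM; exact: ltry.
by move=> x; rewrite addr_ge0 // sqr_ge0.
Qed.

Lemma in_l2B f g : in_l2 ip f -> in_l2 ip g -> in_l2 ip (fun x => f x - g x).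
Proof.
move=> hf hg; have := in_l2D hf (in_l2Z (-1) hg).
by rewrite (_ : (fun x => f x + (-1) *: g x) = (fun x => f x - g x)) //; apply: funext => x; rewrite scaleN1r.
Qed.

Lemma hn_chi B f x : hn (chi B f x) <= hn (f x).
Proof. by rewrite /chi; case: ifP => _ //; rewrite hnorm0 // hnorm_ge0. Qed.

Lemma l2sq_chi_le B f : (l2sq ip (chi B f) <= l2sq ip f)%E.
Proof.
apply: ES_le => x; rewrite ler_sqr ?hn_chi //; apply: hnorm_ge0.
Qed.

Lemma in_l2_chi B f : in_l2 ip f -> in_l2 ip (chi B f).
Proof. by move=> h; apply: le_lt_trans h; apply: l2sq_chi_le. Qed.

Lemma l2norm_chi_le B f : in_l2 ip f -> l2norm ip (chi B f) <= l2norm ip f.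
Proof.
move=> h; apply: ler_wsqrtr; apply: fine_le.
- by rewrite ge0_fin_numE ?l2sq_ge0 // in_l2_chi.
- by rewrite ge0_fin_numE ?l2sq_ge0.
- exact: l2sq_chi_le.
Qed.

Lemma l2norm_eq0 f : in_l2 ip f -> l2norm ip f = 0 -> forall x, f x = 0.
Proof.
move=> hf h x; apply: (hnorm_eq0 hH).
have h2 : fine (l2sq ip f) = 0.
  by rewrite -l2norm_sq h expr0n.
have h3 : l2sq ip f = 0%E by rewrite (l2sq_fin hf) h2.
apply/eqP; rewrite -sqrf_eq0; apply/eqP.
exact: (@ES_eq0 _ _ (fun x => hn (f x) ^+ 2) (fun x => sqr_ge0 _) h3 x).
Qed.

Lemma fsum_ReIm f g : in_l2 ip f -> in_l2 ip g ->
  fsum (fun x => complex.Re (ip (f x) (g x))) /\ fsum (fun x => complex.Im (ip (f x) (g x))).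
Proof.
move=> hf hg.
have hp : (ES (fun x => ((hn (f x) ^+ 2 + hn (g x) ^+ 2) / 2)%R) < +oo)%E.
  rewrite (_ : (fun x => _) = (fun x => 2^-1 * (hn (f x) ^+ 2 + hn (g x) ^+ 2))); last first.
    by apply: funext => x; rewrite mulrC.
  rewrite ESZ ?ESD //; try (move=> x; exact: sqr_ge0).
    rewrite -!l2sq_ES (l2sq_fin hf) (l2sq_fin hg) -EFinD -EFinM; exact: ltry.
  by move=> x; rewrite addr_ge0 // sqr_ge0.
split; apply: (fsum_le _ _ hp) => x; [exact: Re_ip_bound | exact: Im_ip_bound].
Qed.

Lemma fsum_hn2 f : in_l2 ip f -> fsum (fun x => hn (f x) ^+ 2).
Proof.
move=> hf; apply: (fsum_le (fun x => hn (f x) ^+ 2)) => // x.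
by rewrite ger0_norm // sqr_ge0.
Qed.

Lemma l2ip_linl a f g u : in_l2 ip f -> in_l2 ip g -> in_l2 ip u ->
  l2ip ip (fun x => a *: f x + g x) u = a * l2ip ip f u + l2ip ip g u.
Proof.
move=> hf hg hu; rewrite /l2ip /csum.
have [rf iff] := fsum_ReIm hf hu; have [rg ig] := fsum_ReIm hg hu.
have -> : (fun x => complex.Re (ip (a *: f x + g x) (u x))) =
  (fun x => complex.Re a * complex.Re (ip (f x) (u x)) + (- complex.Im a) * complex.Im (ip (f x) (u x))
            + complex.Re (ip (g x) (u x))).
  by apply: funext => x; rewrite ip_linl // cReD cReM mulNr.
have -> : (fun x => complex.Im (ip (a *: f x + g x) (u x))) =
  (fun x => complex.Re a * complex.Im (ip (f x) (u x)) + complex.Im a * complex.Re (ip (f x) (u x))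
            + complex.Im (ip (g x) (u x))).
  by apply: funext => x; rewrite ip_linl // cImD cImM.
rewrite !rsum_lin //.
apply/eqP; rewrite eq_complex; apply/andP; split; apply/eqP.
  by rewrite cReD cReM /=; ring.
by rewrite cImD cImM /=; ring.
Qed.

Lemma l2ip0l u : l2ip ip (fun _ : X => 0) u = 0.
Proof.
rewrite /l2ip /csum.
have -> : (fun x => complex.Re (ip 0 (u x))) = (fun=> 0).
  by apply: funext => x; rewrite ip0l.
have -> : (fun x => complex.Im (ip 0 (u x))) = (fun=> 0).
  by apply: funext => x; rewrite ip0l.
by rewrite rsum0.
Qed.

Lemma l2ipZl a f u : in_l2 ip f -> in_l2 ip u ->
  l2ip ip (fun x => a *: f x) u = a * l2ip ip f u.
Proof.
move=> hf hu.
have -> : (fun x => a *: f x) = (fun x => a *: f x + (fun _ => 0) x).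
  by apply: funext => x; rewrite addr0.
have h0 : in_l2 ip (fun _ : X => 0) by exact: in_l2_0.
by rewrite (l2ip_linl a hf h0 hu) l2ip0l // addr0.
Qed.

Lemma l2ip_conj f g : l2ip ip f g = conjc (l2ip ip g f).
Proof.
rewrite /l2ip /csum /conjc.
have -> : (fun x => complex.Re (ip (f x) (g x))) = (fun x => complex.Re (ip (g x) (f x))).
  by apply: funext => x; rewrite ip_sym // cReJ.
have -> : (fun x => complex.Im (ip (f x) (g x))) = (fun x => - complex.Im (ip (g x) (f x))).
  by apply: funext => x; rewrite ip_sym // cImJ.
by rewrite rsumN.
Qed.

Lemma l2ip_self g : in_l2 ip g -> l2ip ip g g = ((l2norm ip g ^+ 2)%:C)%C.
Proof.
move=> hg; rewrite /l2ip /csum.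
have -> : (fun x => complex.Im (ip (g x) (g x))) = (fun=> 0).
  by apply: funext => x; rewrite Im_ipself.
have -> : (fun x => complex.Re (ip (g x) (g x))) = (fun x => hn (g x) ^+ 2).
  by apply: funext => x; rewrite hnorm_sq.
by rewrite rsum0 rsum_ge0E ?l2norm_sq // => x; exact: sqr_ge0.
Qed.

End L2.

Section L2b.
Variable R : realType.
Variable H : lmodType R[i].
Variable ip : H -> H -> R[i].
Hypothesis hH : is_hilbert ip.
Local Notation hn := (hnorm ip).

Lemma CS (X : choiceType) (g u : X -> H) : in_l2 ip g -> in_l2 ip u -> l2norm ip u = 1 ->
  cn (l2ip ip g u) <= l2norm ip g.
Proof.
move=> hg hu nu.
set z := l2ip ip g u. set n := cn z.
have n0 : 0 <= n by apply: cn_ge0.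
case: (eqVneq n 0) => [->|nn0]; first exact: l2norm_ge0.
have np : 0 < n by rewrite lt0r nn0 n0.
have e : n ^+ 2 = complex.Re z ^+ 2 + complex.Im z ^+ 2 by rewrite /n cn_sq.
pose th : R[i] := Complex (complex.Re z / n) (- complex.Im z / n).
have eth : complex.Re (th * z) = n.
  rewrite cReM /th /=.
  have -> : complex.Re z / n * complex.Re z - - complex.Im z / n * complex.Im z =
            (complex.Re z ^+ 2 + complex.Im z ^+ 2) / n by field.
  by rewrite -e expr2 mulfK.
have cth : cn th = 1.
  rewrite /cn /th /=.
  have -> : (complex.Re z / n) ^+ 2 + (- complex.Im z / n) ^+ 2 = 1; last exact: sqrtr1.
  have -> : (complex.Re z / n) ^+ 2 + (- complex.Im z / n) ^+ 2 =
            (complex.Re z ^+ 2 + complex.Im z ^+ 2) / n ^+ 2 by field.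
  by rewrite -e divff // expf_neq0.
have hthg := in_l2Z hH th hg.
have key : n = rsum (fun x => complex.Re (ip (th *: g x) (u x))).
  by rewrite -eth -/z -(l2ipZl hH th hg hu).
have [fr _] := fsum_ReIm hH hthg hu.
have f1 := fsum_hn2 hthg; have f2 := fsum_hn2 hu.
have bound : forall l, 0 < l -> n <= l / 2 * l2norm ip g ^+ 2 + l^-1 / 2.
  move=> l l0; rewrite key.
  have hle : forall x, complex.Re (ip (th *: g x) (u x)) <=
     l / 2 * hn (th *: g x) ^+ 2 + l^-1 / 2 * hn (u x) ^+ 2 + 0.
    move=> x; have := Re_ip_le hH l (th *: g x) (u x) l0.
    move=> h; apply: (le_trans h); rewrite le_eqVlt; apply/orP; left; apply/eqP; field; exact: lt0r_neq0.
  apply: le_trans (rsum_le fr _ hle) _.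
    by apply: fsumD; [apply: fsumD; apply: fsumZ|exact: fsum0].
  rewrite rsum_lin //; last exact: fsum0.
  rewrite rsum0 addr0 !rsum_ge0E; try (move=> x; exact: sqr_ge0).
  rewrite -!l2sq_ES -!l2norm_sq (l2normZ hH th hg) cth mul1r nu expr1n mulr1.
  by [].
have G0 : 0 <= l2norm ip g by apply: l2norm_ge0.
case: (eqVneq (l2norm ip g) 0) => [G|Gn0].
  have := bound n^-1; rewrite invr_gt0 np invrK G expr0n /= mulr0 add0r => /(_ isT) h.
  exfalso; move: h; lra.
have Gp : 0 < l2norm ip g by rewrite lt0r Gn0 G0.
have := bound (l2norm ip g)^-1; rewrite invr_gt0 Gp invrK => /(_ isT).
have -> : (l2norm ip g)^-1 / 2 * l2norm ip g ^+ 2 + l2norm ip g / 2 = l2norm ip g.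
  by field.
by [].
Qed.

Variables X Y : choiceType.

Lemma T0 (T : (X -> H) -> (Y -> H)) : bounded_op ip T -> T (fun _ => 0) = (fun _ => 0).
Proof.
rewrite /bounded_op => -[lin _ _].
have h0 : in_l2 ip (fun _ : X => 0) by exact: in_l2_0.
have := lin 1 _ _ h0 h0.
rewrite (_ : (fun x : X => 1 *: (0 : H) + 0) = (fun _ => 0)); last first.
  by apply: funext => x; rewrite scaler0 addr0.
move=> e; apply: funext => y; have := congr1 (fun F => F y) e; rewrite /= scale1r.
move/(congr1 (fun z => z - T (fun _ => 0) y)); rewrite subrr addrK => h; exact: (esym h).
Qed.

Lemma TZ (T : (X -> H) -> (Y -> H)) a f : bounded_op ip T -> in_l2 ip f ->
  T (fun x => a *: f x) = (fun y => a *: T f y).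
Proof.
move=> hT hf; have [lin _ _] : _ := hT.
have h0 : in_l2 ip (fun _ : X => 0) by exact: in_l2_0.
have := lin a _ _ hf h0; rewrite (T0 hT).
rewrite (_ : (fun x => a *: f x + 0) = (fun x => a *: f x)); last first.
  by apply: funext => x; rewrite addr0.
move=> ->; apply: funext => y; by rewrite addr0.
Qed.

Lemma opnorm_le1 (t : (X -> H) -> (Y -> H)) : opnorm_le ip t 1 -> (opnorm ip t <= 1%:E)%E.
Proof. by move=> h; apply: ereal_inf_lbound; exists 1 => //; split. Qed.

Lemma opnorm_witness (t : (X -> H) -> (Y -> H)) (delta : R) : 0 < delta ->
  (delta%:E <= opnorm ip t)%E ->
  exists f, in_l2 ip f /\ delta / 2 * l2norm ip f < l2norm ip (t f).
Proof.
move=> d0 hd; apply: contrapT => nf.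
have hle : opnorm_le ip t (delta / 2).
  move=> f hf; rewrite leNgt; apply/negP => h; apply: nf; exists f; split => //.
have : (opnorm ip t <= (delta / 2)%:E)%E.
  by apply: ereal_inf_lbound; exists (delta / 2) => //; split => //; rewrite divr_ge0 // ltW.
move=> h2; have := le_trans hd h2; rewrite lee_fin; lra.
Qed.

Lemma opnorm_bound (t : (X -> H) -> (Y -> H)) (eps e' : R) :
  (opnorm ip t <= eps%:E)%E -> eps < e' ->
  forall f, in_l2 ip f -> l2norm ip (t f) <= e' * l2norm ip f.
Proof.
move=> ho he f hf.
have : (opnorm ip t < e'%:E)%E by apply: le_lt_trans ho _; rewrite lte_fin.
case/ereal_inf_lt => _ [c [c0 hc] <-]; rewrite lte_fin => ce.
apply: le_trans (hc f hf) _; apply: ler_wpM2r; [exact: l2norm_ge0 | exact: ltW].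
Qed.

End L2b.

Section Main.
Variable R : realType.
Variable H : lmodType R[i].
Variable ip : H -> H -> R[i].
Hypothesis hH : is_hilbert ip.

Lemma chiZ (Z : choiceType) (B : set Z) (a : R[i]) (F : Z -> H) :
  chi B (fun y => a *: F y) = (fun y => a *: chi B F y).
Proof. by apply: funext => y; rewrite /chi; case: ifP => _ //; rewrite scaler0. Qed.

Lemma chi0 (Z : choiceType) (B : set Z) : chi B (fun _ : Z => (0 : H)) = (fun _ => 0).
Proof. by apply: funext => y; rewrite /chi /=; case: ifP. Qed.

Lemma chi_chi (Z : choiceType) (B : set Z) (F : Z -> H) : chi B (chi B F) = chi B F.
Proof. by apply: funext => y; rewrite /chi /=; case: ifP => // ->. Qed.

Lemma l2norm0 (Z : choiceType) : l2norm ip (fun _ : Z => (0 : H)) = 0.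
Proof.
rewrite /l2norm l2sq_ES (_ : (fun x => hnorm ip 0 ^+ 2) = (fun=> 0)) ?ES0 /= ?sqrtr0 //.
by apply: funext => x; rewrite hnorm0 // expr0n.
Qed.

Lemma cn_realC (c : R) : cn ((c%:C)%C) = `|c|.
Proof. by rewrite /cn /= expr0n /= addr0 sqrtr_sqr. Qed.

Lemma cnN (c : R[i]) : cn (- c) = cn c.
Proof. by case: c => a b; rewrite /cn /= !sqrrN. Qed.

Lemma l2ip_zero (Z : choiceType) (f g : Z -> H) :
  (forall x, ip (f x) (g x) = 0) -> l2ip ip f g = 0.
Proof.
move=> h; rewrite /l2ip /csum.
have -> : (fun x => complex.Re (ip (f x) (g x))) = (fun=> 0).
  by apply: funext => x; rewrite h.
have -> : (fun x => complex.Im (ip (f x) (g x))) = (fun=> 0).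
  by apply: funext => x; rewrite h.
by rewrite rsum0.
Qed.

Variables (X Y : choiceType).

Lemma unit_witness (T : (X -> H) -> (Y -> H)) (A : set X) (Cs : set Y) (delta : R) :
  bounded_op ip T -> 0 < delta ->
  (delta%:E <= opnorm ip (fun f => chi Cs (T (chi A f))))%E ->
  exists u : X -> H, [/\ in_l2 ip u, l2norm ip u = 1, (forall x, ~ A x -> u x = 0) &
     delta / 2 < l2norm ip (chi Cs (T u))].
Proof.
move=> hT d0 hd.
have [f [hf hlt]] := @opnorm_witness _ _ _ _ _ _ delta d0 hd.
have [_ Tl2 _] : _ := hT.
set v := chi A f.
have hv : in_l2 ip v by exact: in_l2_chi.
have vf : l2norm ip v <= l2norm ip f by exact: l2norm_chi_le.
have f0 : 0 <= l2norm ip f by apply: l2norm_ge0.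
case: (eqVneq (l2norm ip v) 0) => [v0|vn0].
  have : v = (fun _ => 0) by apply: funext => x; exact: (l2norm_eq0 hH hv v0).
  move=> ev; move: hlt; rewrite -/v ev (T0 hH hT) chi0 l2norm0.
  move=> h; exfalso; have : 0 <= delta / 2 * l2norm ip f by rewrite mulr_ge0 // divr_ge0 // ltW.
  lra.
have vp : 0 < l2norm ip v by rewrite lt0r vn0 l2norm_ge0.
pose k : R[i] := (((l2norm ip v)^-1)%:C)%C.
exists (fun x => k *: v x); split.
- exact: in_l2Z.
- rewrite (l2normZ hH k hv) /k cn_realC ger0_norm ?invr_ge0 ?ltW //.
  by rewrite mulVf.
- by move=> x nA; rewrite /v /chi; case: ifP => [/asboolP //|_]; rewrite scaler0.
- rewrite (TZ hH k hT hv) chiZ (l2normZ hH k (in_l2_chi hH Cs (Tl2 _ hv))).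
  rewrite /k cn_realC ger0_norm ?invr_ge0 ?ltW //.
  rewrite ltr_pdivlMl //.
  by apply: le_lt_trans hlt; rewrite mulrC ler_wpM2l // divr_ge0 // ltW.
Qed.

End Main.

Unset Implicit Arguments.

Theorem mainTheorem3 (R : realType) (X Y : choiceType)
    (dX : X -> X -> R) (dY : Y -> Y -> R)
    (hX : is_metric dX) (hY : is_metric dY)
    (H : lmodType R[i]) (ip : H -> H -> R[i]) (hH : is_hilbert ip)
    (T : (X -> H) -> (Y -> H)) (Tstar : (Y -> H) -> (X -> H))
    (hT : bounded_op ip T) (hTstar : is_adjoint ip T Tstar)
    (hwac : weakly_approx_controlled ip dX dY T Tstar) :
  forall r delta : R, 0 <= r -> 0 < delta ->
  exists Rr : R, 0 <= Rr /\
    forall (A : set X) (Cs Cs' : set Y),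
      (diam dX A <= r%:E)%E ->
      (delta%:E <= opnorm ip (fun f => chi Cs (T (chi A f))))%E ->
      (delta%:E <= opnorm ip (fun f => chi Cs' (T (chi A f))))%E ->
      (setdist dY Cs Cs' <= Rr%:E)%E.
Proof.
move=> r delta r0 d0.
pose eps := delta ^+ 2 / 8.
have eps0 : 0 < eps by rewrite divr_gt0 // exprn_gt0.
have [Rr [Rr0 hR]] := hwac r eps r0 eps0.
exists Rr; split => // A Cs Cs' hdiam h1 h2.
rewrite leNgt; apply/negP => hlt.
have [u [hu nu uA uC]] := unit_witness hH A Cs delta hT d0 h1.
have [w [hw nw wA wC]] := unit_witness hH A Cs' delta hT d0 h2.
have [Tlin Tl2 _] : _ := hT.
have [[_ Sl2 _] adj] : _ := hTstar.
pose t : (X -> H) -> (X -> H) := fun h x => l2ip ip h u *: w x.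
have tl2 : forall f, in_l2 ip f -> in_l2 ip (t f) by move=> f _; exact: (in_l2Z hH _ hw).
have tle : opnorm_le ip t 1.
  move=> f hf; rewrite /t (l2normZ hH _ hw) nw mulr1 mul1r; exact: (CS hH hf hu nu).
have bt : bounded_op ip t.
  split => //; last by exists 1.
  move=> a f g hf hg; apply: funext => x.
  by rewrite /t (l2ip_linl hH a hf hg hu) scalerDl scalerA.
have ot : (opnorm ip t <= 1%:E)%E := opnorm_le1 tle.
have pt : propagation_le ip dX t r.
  move=> A' B hAB f hf; apply: funext => x; rewrite /chi /t /=.
  case: ifP => [/asboolP Bx|_] //.
  case: (pselect (A x)) => Ax; last by rewrite (wA x Ax) scaler0.
  rewrite (_ : l2ip ip _ u = 0) ?scale0r //.
  apply: l2ip_zero => x' /=.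
  case: ifP => [/asboolP A'x'|_]; last exact: (ip0l hH).
  case: (pselect (A x')) => Ax'; last by rewrite (uA x' Ax') (ip0r hH).
  exfalso.
  have h3 : (setdist dX A' B <= (dX x' x)%:E)%E.
    by apply: ereal_inf_lbound; exists x' => //; exists x.
  have h4 : ((dX x' x)%:E <= diam dX A)%E.
    by apply: ereal_sup_ubound; exists x' => //; exists x.
  by have := lt_le_trans hAB (le_trans h3 (le_trans h4 hdiam)); rewrite ltxx.
have [s [bs ps os]] := hR t bt ot pt.
have [_ sl2 _] : _ := bs.
pose g := chi Cs (T u).
have hTu := Tl2 u hu.
have hg : in_l2 ip g := in_l2_chi hH Cs hTu.
have psg : chi Cs' (s g) = (fun _ => 0) := ps Cs Cs' hlt (T u) hTu.
have hTg := Sl2 g hg.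
have etT : T (t (Tstar g)) = (fun y => l2ip ip (Tstar g) u *: T w y).
  by rewrite /t; exact: (TZ hH _ hT hw).
have ec : l2ip ip (Tstar g) u = (((l2norm ip g) ^+ 2)%:C)%C.
  rewrite (l2ip_conj hH) -(adj u g hu hg).
  have -> : l2ip ip (T u) g = l2ip ip g g.
    rewrite /l2ip; congr csum; apply: funext => y; rewrite /g /chi.
    by case: ifP => _ //; rewrite (ip0r hH) (ip0l hH).
  by rewrite (l2ip_self hH hg) conjc_real.
set G := l2norm ip g.
set W := l2norm ip (chi Cs' (T w)).
have hD : in_l2 ip (fun y => s g y - T (t (Tstar g)) y).
  exact: (in_l2B hH (sl2 g hg) (Tl2 _ (tl2 _ hTg))).
have hb := @opnorm_bound _ _ _ _ _ _ eps (2 * eps) os ltac:(lra) g hg.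
rewrite /= in hb.
have hc := l2norm_chi_le hH Cs' hD.
have echi : chi Cs' (fun y => s g y - T (t (Tstar g)) y) =
            (fun y => (- ((G ^+ 2)%:C)%C) *: chi Cs' (T w) y).
  apply: funext => y; rewrite etT ec; have := congr1 (fun F => F y) psg.
  rewrite /chi /=; case: ifP => _ /=.
    by move=> ->; rewrite sub0r scaleNr.
  by rewrite scaler0.
rewrite echi (l2normZ hH _ (in_l2_chi hH Cs' (Tl2 w hw))) cnN cn_realC in hc.
rewrite ger0_norm ?sqr_ge0 // -/W in hc.
have hGW := le_trans hc hb.
move: uC wC; rewrite -/g -/G -/W => uC wC.
rewrite /eps in hGW.
rewrite -/G in hGW.
have G0 : 0 < G by apply: lt_trans uC; rewrite divr_gt0.
have p1 : delta / 2 * (delta / 2) < G * W.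
  by apply: ltr_pM => //; rewrite divr_ge0 // ltW.
have p2 : G * (delta / 2 * (delta / 2)) < G * (G * W) by rewrite ltr_pM2l.
have e1 : G ^+ 2 * W = G * (G * W) by rewrite expr2 mulrA.
have e2 : 2 * (delta ^+ 2 / 8) * G = G * (delta / 2 * (delta / 2)) by rewrite expr2; field.
lra.
Qed.
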